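(* Let $p=P\langle x\rangle\to_{\mathrm{ue}}P\langle v^{\alpha}\rangle=q$ with $P\in\mathcal{X}_{{\mathcal{U}},{\mathcal{A}}}$ and $P(x)=v$. Then there exist a program $r$ and a reduction sequence $d: q\to_{\mathrm{ue}}^{k}\to_{\mathrm{um}} r$ such that: (1) the evaluation context of each $\to_{\mathrm{ue}}$ step in $d$ is in $\mathcal{X}_{{\mathcal{U}},{\mathcal{A}}}$, and the one of the $\to_{\mathrm{um}}$ step is in $\mathcal{M}_{{\mathcal{U}},{\mathcal{A}}}$; (2) $k\geq 0$ is the number of rules (NA) in the derivation of $P\in\mathcal{X}_{{\mathcal{U}},{\mathcal{A}}}$.
   Context: Syntax. Terms $t,u,s ::= x\mid\lambda x.t\mid t\,u$; values $v ::= \lambda x.t$ (variables are not values); environments $E ::= \epsilon\mid E[x\leftarrow t]$; programs $p ::= (t,E)$; $x$ is bound in $E$ and $u$ in $(u,E[x\leftarrow t])$; up to $\alpha$; appended ES bind variables not in the domain of the program/context. Inert terms $i ::= x\mid i\,f$, fireballs $f ::= v\mid i$, non-variable inert terms $i^{+} ::= i\,f$. Contexts. Open term evaluation contexts $\mathcal{H} ::= \langle\cdot\rangle\mid\mathcal{H}\,t\mid i\,\mathcal{H}$; applicative term contexts $\mathcal{H}^{@} ::= \langle\cdot\rangle\,t\mid\mathcal{H}^{@}\,t\mid i\,\mathcal{H}^{@}$. Term contexts $C ::= \langle\cdot\rangle\mid C\,t\mid t\,C$; environment contexts $G ::= E[x\leftarrow C]\mid G[x\leftarrow u]$; program contexts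 $P ::= (C,E)\mid(t,G)$. Appending: $(t,E)@[x\leftarrow u]=(t,E[x\leftarrow u])$, $(C,E)@[x\leftarrow u]=(C,E[x\leftarrow u])$, $(t,G)@[x\leftarrow u]=(t,G[x\leftarrow u])$, and $(t,E)@[x\leftarrow C]:=(t,E[x\leftarrow C])$. Plugging: $(C,E)\langle(t,E')\rangle=(C\langle t\rangle,E'E)$; $(u,E[x\leftarrow C])\langle(t,E')\rangle=(u,E[x\leftarrow C\langle t\rangle]E')$; $(u,G[x\leftarrow s])\langle(t,E)\rangle=((u,G)\langle(t,E)\rangle)@[x\leftarrow s]$; $P\langle t\rangle:=P\langle(t,\epsilon)\rangle$. Look-up $P(x)=t$ if the ES list of $P$ contains $[x\leftarrow t]$ with $t$ a term, $\bot$ otherwise. $v^{\alpha}$: copy of $v$ with fresh bound variables. Variable sets. $an(\lambda x.t)=an(x)=\emptyset$; $an(tu)=\{x\}\cup an(u)$ if $t=x$ variable, else $an(t)\cup an(u)$; $an(\langle\cdot\rangle)=\emptyset$, $an(\mathcal{H}\,t)=an(\mathcal{H})$, $an(i\,\mathcal{H})=an(i)\cup an(\mathcal{H})$. $un(\lambda x.t)=\emptyset$, $un(x)=\{x\}$, $un(tu)=un(u)$ if $t$ variable, else $un(t)\cup un(u)$; $un(\langle\cdot\rangle)=\emptyset$, $un(\mathcal{H}\,t)=un(\mathcal{H})$, $un(i\,\mathcal{H})=un(i)\cup un(\mathcal{H})$. $\mathrm{upd}(S,x,y):=S$ if $x\notin S$, else $(S\setminus\{x\})\cup\{y\}$. Multiplicative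 contexts $P\in\mathcal{M}_{{\mathcal{U}},{\mathcal{A}}}$, inductively: (ax) $(\mathcal{H},\epsilon)\in\mathcal{M}_{un(\mathcal{H}),an(\mathcal{H})}$; (var) $P\in\mathcal{M}_{{\mathcal{U}},{\mathcal{A}}}$, $x\in{\mathcal{U}}\cup{\mathcal{A}}$ $\Rightarrow$ $P@[x\leftarrow y]\in\mathcal{M}_{\mathrm{upd}({\mathcal{U}},x,y),\mathrm{upd}({\mathcal{A}},x,y)}$; (gc) $x\notin{\mathcal{U}}\cup{\mathcal{A}}$ $\Rightarrow$ $P@[x\leftarrow t]\in\mathcal{M}_{{\mathcal{U}},{\mathcal{A}}}$; (I) $x\in{\mathcal{U}}\cup{\mathcal{A}}$ $\Rightarrow$ $P@[x\leftarrow i^{+}]\in\mathcal{M}_{({\mathcal{U}}\setminus\{x\})\cup un(i^{+}),({\mathcal{A}}\setminus\{x\})\cup an(i^{+})}$; (U) $x\in{\mathcal{U}}\setminus{\mathcal{A}}$ $\Rightarrow$ $P@[x\leftarrow v]\in\mathcal{M}_{{\mathcal{U}}\setminus\{x\},{\mathcal{A}}}$; (her) $x\notin{\mathcal{U}}\cup{\mathcal{A}}$ $\Rightarrow$ $P\langle x\rangle@[x\leftarrow\mathcal{H}]\in\mathcal{M}_{{\mathcal{U}}\cup un(\mathcal{H}),{\mathcal{A}}\cup an(\mathcal{H})}$ (each with premise $P\in\mathcal{M}_{{\mathcal{U}},{\mathcal{A}}}$). Exponential contexts $P\in\mathcal{X}_{{\mathcal{U}},{\mathcal{A}}}$, inductively: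 (ax1) $(\mathcal{H}^{@},\epsilon)\in\mathcal{X}_{un(\mathcal{H}^{@}),an(\mathcal{H}^{@})}$; (ax2) $P\in\mathcal{M}_{{\mathcal{U}},{\mathcal{A}}}$, $x\notin{\mathcal{U}}\cup{\mathcal{A}}$ $\Rightarrow$ $P\langle x\rangle@[x\leftarrow\mathcal{H}^{@}]\in\mathcal{X}_{({\mathcal{U}}\setminus\{x\})\cup un(\mathcal{H}^{@}),{\mathcal{A}}\cup an(\mathcal{H}^{@})}$; and, each with premise $P\in\mathcal{X}_{{\mathcal{U}},{\mathcal{A}}}$: (var) $x\in{\mathcal{U}}\cup{\mathcal{A}}$ $\Rightarrow$ $P@[x\leftarrow y]\in\mathcal{X}_{\mathrm{upd}({\mathcal{U}},x,y),\mathrm{upd}({\mathcal{A}},x,y)}$; (I) $x\in{\mathcal{U}}\cup{\mathcal{A}}$ $\Rightarrow$ $P@[x\leftarrow i^{+}]\in\mathcal{X}_{({\mathcal{U}}\setminus\{x\})\cup un(i^{+}),({\mathcal{A}}\setminus\{x\})\cup an(i^{+})}$; (gc) $x\notin{\mathcal{U}}\cup{\mathcal{A}}$ $\Rightarrow$ $P@[x\leftarrow t]\in\mathcal{X}_{{\mathcal{U}},{\mathcal{A}}}$; (U) $x\in{\mathcal{U}}\setminus{\mathcal{A}}$ $\Rightarrow$ $P@[x\leftarrow v]\in\mathcal{X}_{{\mathcal{U}}\setminus\{x\},{\mathcal{A}}}$; (NA) $x\notin{\mathcal{A}}$ $\Rightarrow$ $P\langle x\rangle@[x\leftarrow\langle\cdot\rangle]\in\mathcal{X}_{{\mathcal{U}}\setminus\{x\},{\mathcal{A}}}$.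 Useful Open CbNeed rules: $P\langle(\lambda x.t)u\rangle\to_{\mathrm{um}}P\langle(t,[x\leftarrow u])\rangle$ if $P\in\mathcal{M}_{{\mathcal{U}},{\mathcal{A}}}$ for some ${\mathcal{U}},{\mathcal{A}}$; $P\langle x\rangle\to_{\mathrm{ue}}P\langle v^{\alpha}\rangle$ if $P\in\mathcal{X}_{{\mathcal{U}},{\mathcal{A}}}$ for some ${\mathcal{U}},{\mathcal{A}}$ and $P(x)=v$. *)

(* Defs.v *)
From mathcomp Require Import all_boot.
From mathcomp Require Import finmap.
From Stdlib Require List.

Set Implicit Arguments.
Unset Strict Implicit.
Unset Printing Implicit Defensive.

Local Open Scope fset_scope.

Inductive term : Type :=
| Var : nat -> term
| Lam : nat -> term -> term
| App : term -> term -> term.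

Definition is_value (t : term) : Prop :=
  match t with Lam _ _ => True | _ => False end.

Inductive inert : term -> Prop :=
| inert_var : forall x, inert (Var x)
| inert_app : forall i f, inert i -> fireball f -> inert (App i f)
with fireball : term -> Prop :=
| fb_val : forall x t, fireball (Lam x t)
| fb_inert : forall i, inert i -> fireball i.

Definition inert_plus (t : term) : Prop :=
  match t with App _ _ => inert t | _ => False end.

(* Environments E ::= eps | E[x<-t], represented left-to-right:
   E[x<-t] is  rcons E (x, t);  the concatenation E'E is  E' ++ E. *)
Definition env := seq (nat * term)%type.

Definition program := (term * env)%type.

Inductive dbterm : Type :=
| DFree : nat -> dbterm
| DBnd : nat -> dbterm
| DLam : dbterm -> dbterm
| DApp : dbterm -> dbterm -> dbterm.

Fixpoint db (ctx : seq nat) (t : term) : dbterm :=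
  match t with
  | Var x => if x \in ctx then DBnd (index x ctx) else DFree x
  | Lam x b => DLam (db (x :: ctx) b)
  | App t1 t2 => DApp (db ctx t1) (db ctx t2)
  end.

Definition alpha (t u : term) : Prop := db [::] t = db [::] u.

Fixpoint tvars (t : term) : seq nat :=
  match t with
  | Var x => [:: x]
  | Lam x b => x :: tvars b
  | App t1 t2 => tvars t1 ++ tvars t2
  end.

Fixpoint bvars (t : term) : seq nat :=
  match t with
  | Var _ => [::]
  | Lam x b => x :: bvars b
  | App t1 t2 => bvars t1 ++ bvars t2
  end.

Definition evars (E : env) : seq nat :=
  flatten (map (fun es => es.1 :: tvars es.2) E).

Definition pvars (p : program) : seq nat := tvars p.1 ++ evars p.2.

Inductive tctx : Type :=
| Hole : tctx
| CAppL : tctx -> term -> tctx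
| CAppR : term -> tctx -> tctx.

Fixpoint tplug (C : tctx) (t : term) : term :=
  match C with
  | Hole => t
  | CAppL C' u => App (tplug C' t) u
  | CAppR u C' => App u (tplug C' t)
  end.

Fixpoint cvars (C : tctx) : seq nat :=
  match C with
  | Hole => [::]
  | CAppL C' u => cvars C' ++ tvars u
  | CAppR u C' => tvars u ++ cvars C'
  end.

Inductive is_H : tctx -> Prop :=
| isH_hole : is_H Hole
| isH_appl : forall C t, is_H C -> is_H (CAppL C t)
| isH_appr : forall i C, inert i -> is_H C -> is_H (CAppR i C).

Inductive is_Hat : tctx -> Prop :=
| isHat_base : forall t, is_Hat (CAppL Hole t)
| isHat_appl : forall C t, is_Hat C -> is_Hat (CAppL C t)
| isHat_appr : forall i C, inert i -> is_Hat C -> is_Hat (CAppR i C).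

(* program contexts  P ::= (C, E) | (t, G)  with
   G ::= E[x<-C] | G[x<-u];  every G is of the form  E1[x<-C]E2.
   PC C E          represents (C, E);
   PG t E1 x C E2  represents (t, E1[x<-C]E2). *)
Inductive pctx : Type :=
| PC : tctx -> env -> pctx
| PG : term -> env -> nat -> tctx -> env -> pctx.

Definition pctx_app (P : pctx) (x : nat) (u : term) : pctx :=
  match P with
  | PC C E => PC C (rcons E (x, u))
  | PG t E1 y C E2 => PG t E1 y C (rcons E2 (x, u))
  end.

Definition prog_app_ctx (p : program) (x : nat) (C : tctx) : pctx :=
  PG p.1 p.2 x C [::].

Definition pplugp (P : pctx) (q : program) : program :=
  match P with
  | PC C E => (tplug C q.1, q.2 ++ E)
  | PG u E1 x C E2 => (u, rcons E1 (x, tplug C q.1) ++ q.2 ++ E2)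
  end.

Definition pplug (P : pctx) (t : term) : program := pplugp P (t, [::]).

Definition lookup (P : pctx) (x : nat) (t : term) : Prop :=
  match P with
  | PC _ E => List.In (x, t) E
  | PG _ E1 _ _ E2 => List.In (x, t) (E1 ++ E2)
  end.

Definition pctx_vars (P : pctx) : seq nat :=
  match P with
  | PC C E => cvars C ++ evars E
  | PG u E1 x C E2 => tvars u ++ evars E1 ++ x :: cvars C ++ evars E2
  end.

Fixpoint an (t : term) : {fset nat} :=
  match t with
  | Var _ => fset0
  | Lam _ _ => fset0
  | App (Var x) u => [fset x] `|` an u
  | App t1 u => an t1 `|` an u
  end.

Fixpoint un (t : term) : {fset nat} :=
  match t with
  | Var x => [fset x]
  | Lam _ _ => fset0
  | App (Var _) u => un u
  | App t1 u => un t1 `|` un u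
  end.

Fixpoint anC (C : tctx) : {fset nat} :=
  match C with
  | Hole => fset0
  | CAppL C' _ => anC C'
  | CAppR i C' => an i `|` anC C'
  end.

Fixpoint unC (C : tctx) : {fset nat} :=
  match C with
  | Hole => fset0
  | CAppL C' _ => unC C'
  | CAppR i C' => un i `|` unC C'
  end.

Definition upd (S : {fset nat}) (x y : nat) : {fset nat} :=
  if x \in S then (S `\ x) `|` [fset y] else S.

Inductive Mctx : {fset nat} -> {fset nat} -> pctx -> Prop :=
| M_ax : forall C, is_H C -> Mctx (unC C) (anC C) (PC C [::])
| M_var : forall U A P x y, Mctx U A P -> x \in U `|` A ->
    Mctx (upd U x y) (upd A x y) (pctx_app P x (Var y))
| M_gc : forall U A P x t, Mctx U A P -> x \notin U `|` A ->
    Mctx U A (pctx_app P x t)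
| M_I : forall U A P x i, Mctx U A P -> x \in U `|` A -> inert_plus i ->
    Mctx ((U `\ x) `|` un i) ((A `\ x) `|` an i) (pctx_app P x i)
| M_U : forall U A P x v, Mctx U A P -> x \in U -> x \notin A -> is_value v ->
    Mctx (U `\ x) A (pctx_app P x v)
| M_her : forall U A P x C, Mctx U A P -> x \notin U `|` A -> is_H C ->
    Mctx (U `|` unC C) (A `|` anC C) (prog_app_ctx (pplug P (Var x)) x C).

Inductive Xctx : nat -> {fset nat} -> {fset nat} -> pctx -> Prop :=
| X_ax1 : forall C, is_Hat C -> Xctx 0 (unC C) (anC C) (PC C [::])
| X_ax2 : forall U A P x C, Mctx U A P -> x \notin U `|` A -> is_Hat C ->
    Xctx 0 ((U `\ x) `|` unC C) (A `|` anC C)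
         (prog_app_ctx (pplug P (Var x)) x C)
| X_var : forall n U A P x y, Xctx n U A P -> x \in U `|` A ->
    Xctx n (upd U x y) (upd A x y) (pctx_app P x (Var y))
| X_I : forall n U A P x i, Xctx n U A P -> x \in U `|` A -> inert_plus i ->
    Xctx n ((U `\ x) `|` un i) ((A `\ x) `|` an i) (pctx_app P x i)
| X_gc : forall n U A P x t, Xctx n U A P -> x \notin U `|` A ->
    Xctx n U A (pctx_app P x t)
| X_U : forall n U A P x v, Xctx n U A P -> x \in U -> x \notin A ->
    is_value v -> Xctx n (U `\ x) A (pctx_app P x v)
| X_NA : forall n U A P x, Xctx n U A P -> x \notin A ->
    Xctx n.+1 (U `\ x) A (prog_app_ctx (pplug P (Var x)) x Hole).

Definition inX (U A : {fset nat}) (P : pctx) : Prop := exists n, Xctx n U A P.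

Definition fresh_copy (p : program) (v v' : term) : Prop :=
  alpha v v' /\ (forall z, z \in bvars v' -> z \notin pvars p).

Definition ue_step (P : pctx) (p q : program) : Prop :=
  exists x v v', p = pplug P (Var x) /\ lookup P x v /\ is_value v /\
    fresh_copy p v v' /\ q = pplug P v'.

Definition um_step (P : pctx) (p q : program) : Prop :=
  exists x t u, p = pplug P (App (Lam x t) u) /\ x \notin pctx_vars P /\
    q = pplugp P (t, [:: (x, u)]).

(* Main.v *)
Require Import Defs.
From mathcomp Require Import all_boot finmap.
From Stdlib Require Import Btauto.
From Stdlib Require List.

Fixpoint ctxN (N k : nat) : seq nat := if k is k'.+1 then (N + k') :: ctxN N k' else [::].

Lemma mem_ctxN N k y : y \in ctxN N k -> N <= y < N + k.
Proof.
elim: k => [|k IH] //=. rewrite in_cons => /orP[/eqP->|/IH/andP[h1 h2]].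
  by rewrite leq_addr /= addnS ltnSn.
by rewrite h1 /= addnS ltnW // ltnS ltnW.
Qed.

Lemma uniq_ctxN N k : uniq (ctxN N k).
Proof.
elim: k => [|k IH] //=. rewrite IH andbT. apply/negP => /mem_ctxN/andP[_].
by rewrite ltnn.
Qed.

Lemma size_ctxN N k : size (ctxN N k) = k.
Proof. by elim: k => //= k ->. Qed.

Fixpoint undb (N k : nat) (d : dbterm) : term :=
 match d with
 | DFree z => Var z
 | DBnd i => Var (nth 0 (ctxN N k) i)
 | DLam b => Lam (N + k) (undb N k.+1 b)
 | DApp a b => App (undb N k a) (undb N k b)
 end.

Fixpoint wf (N k : nat) (d : dbterm) : bool :=
 match d with
 | DFree z => z < N
 | DBnd i => i < k
 | DLam b => wf N k.+1 b
 | DApp a b => wf N k a && wf N k b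
 end.

Lemma db_undb N d k : wf N k d -> db (ctxN N k) (undb N k d) = d.
Proof.
elim: d k => [z|i|b IH|a IHa b IHb] k /=.
- move=> hz. case: ifP => // /mem_ctxN/andP[h _].
  by move: (leq_trans hz h); rewrite ltnn.
- move=> hi. have hin : nth 0 (ctxN N k) i \in ctxN N k by rewrite mem_nth // size_ctxN.
  by rewrite hin index_uniq ?uniq_ctxN ?size_ctxN.
- by move=> /IH ->.
- by move=> /andP[/IHa -> /IHb ->].
Qed.

Lemma wf_db N t ctx : (forall y, y \in tvars t -> y < N) -> wf N (size ctx) (db ctx t).
Proof.
elim: t ctx => [y|y b IH|a IHa b IHb] ctx /= h.
- case: ifP => hy /=; first by rewrite index_mem.
  by apply: h; rewrite inE.
- apply: (IH (y :: ctx)) => z hz; apply: h; by rewrite inE hz orbT.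
- rewrite IHa ?IHb // => z hz; apply: h; by rewrite mem_cat hz ?orbT.
Qed.

Lemma bvars_undb N d k y : y \in bvars (undb N k d) -> N <= y.
Proof.
elim: d k => [z|i|b IH|a IHa b IHb] k //=.
- rewrite inE => /orP[/eqP->|/IH //]; exact: leq_addr.
- rewrite mem_cat => /orP[/IHa|/IHb] //.
Qed.

Lemma lt_max s y : y \in s -> y < (foldr maxn 0 s).+1.
Proof.
elim: s => //= a s IH; rewrite inE => /orP[/eqP->|/IH h].
  by rewrite ltnS leq_maxl.
by apply: leq_trans h _; rewrite ltnS leq_maxr.
Qed.

Lemma fresh_rename t (S : seq nat) : exists t', alpha t t' /\
  (forall z, z \in bvars t' -> z \notin S) /\ (is_value t -> is_value t').
Proof.
set N := (foldr maxn 0 (tvars t ++ S)).+1.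
exists (undb N 0 (db [::] t)); split; [|split].
- rewrite /alpha. have := @db_undb N (db [::] t) 0. move=> /= -> //.
  apply: (@wf_db N t [::]) => y hy; apply: lt_max; by rewrite mem_cat hy.
- move=> z /bvars_undb hz; apply/negP => hS.
  have : z < N by apply: lt_max; rewrite mem_cat hS orbT.
  by rewrite ltnNge hz.
- by rewrite {}/N; case: t.
Qed.

Lemma alpha_value v v' : alpha v v' -> is_value v -> is_value v'.
Proof. by case: v => // y b; case: v' => //= [z|a b']; rewrite /alpha /=; case: ifP. Qed.

Definition papp (p : program) z u : program := (p.1, rcons p.2 (z, u)).

Lemma pplugp_app Q z u r : pplugp (pctx_app Q z u) r = papp (pplugp Q r) z u.
Proof. by case: Q => [C E|t E1 y C E2]; rewrite /papp /= ?rcons_cat. Qed.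

Lemma pplug_app Q z u t : pplug (pctx_app Q z u) t = papp (pplug Q t) z u.
Proof. exact: pplugp_app. Qed.

Lemma evars_cat E F : evars (E ++ F) = evars E ++ evars F.
Proof. by rewrite /evars map_cat flatten_cat. Qed.

Lemma evars_rcons E e : evars (rcons E e) = evars E ++ e.1 :: tvars e.2.
Proof. by rewrite -cats1 evars_cat /evars /= cats0. Qed.

Lemma mem_pvars_app p z u y : (y \in pvars (papp p z u)) = (y \in pvars p ++ z :: tvars u).
Proof. rewrite /pvars /papp /= evars_rcons /= !mem_cat ?in_cons ?mem_cat; btauto. Qed.

Lemma mem_pctx_vars_app P z u y :
  (y \in pctx_vars (pctx_app P z u)) = (y \in pctx_vars P ++ z :: tvars u).
Proof.
case: P => [C E|t E1 x C E2] /=; rewrite evars_rcons /= !mem_cat ?in_cons ?mem_cat; rewrite ?in_cons ?mem_cat; rewrite ?implybE /is_true; btauto.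
Qed.

Lemma lookup_app Q z u x v : lookup Q x v -> lookup (pctx_app Q z u) x v.
Proof.
case: Q => [C E|t E1 y C E2] /= h; rewrite -cats1 ?catA; apply: List.in_or_app; by left.
Qed.

Lemma lookup_last Q z u : lookup (pctx_app Q z u) z u.
Proof.
case: Q => [C E|t E1 y C E2] /=; rewrite -cats1 ?catA; apply: List.in_or_app; right; by left.
Qed.

Lemma cvars_tplug C t y : y \in cvars C -> y \in tvars (tplug C t).
Proof.
elim: C => [|C IH u|u C IH] //=; rewrite !mem_cat.
  by move=> /orP[/IH->|->]; rewrite ?orbT.
by move=> /orP[->|/IH->]; rewrite ?orbT.
Qed.

Lemma pctx_vars_pplug P t y : y \in pctx_vars P -> y \in pvars (pplug P t).
Proof.
case: P => [C E|u E1 x C E2]; rewrite /pvars /= ?evars_cat ?evars_rcons /=.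
- by rewrite !mem_cat => /orP[/(cvars_tplug _ t)->|->]; rewrite ?orbT.
- rewrite !mem_cat !inE !mem_cat => /or4P[->|->|->|/orP[/(cvars_tplug _ t)->|->]];
  by rewrite ?orbT.
Qed.

Definition ue_stepS (S : seq nat) (P : pctx) (p q : program) : Prop :=
  exists x v v', p = pplug P (Var x) /\ lookup P x v /\ is_value v /\
    alpha v v' /\ (forall z, z \in bvars v' -> z \notin pvars p ++ S) /\ q = pplug P v'.

Definition um_stepS (S : seq nat) (P : pctx) (p q : program) : Prop :=
  exists x t u, p = pplug P (App (Lam x t) u) /\ x \notin pctx_vars P ++ S /\
    q = pplugp P (t, [:: (x, u)]).

Definition Claim n U A P := forall w (S : seq nat), is_value w ->
  (forall z, z \in bvars w -> z \notin S ++ pctx_vars P) ->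
  exists r (ps : nat -> program) (Ps : nat -> pctx) Pm,
    ps 0 = pplug P w /\
    (forall i, i < n -> inX U A (Ps i) /\ ue_stepS S (Ps i) (ps i) (ps i.+1)) /\
    Mctx U A Pm /\ um_stepS S Pm (ps n) r.

Lemma ue_app S z u Q p q : ue_stepS (S ++ z :: tvars u) Q p q ->
  ue_stepS S (pctx_app Q z u) (papp p z u) (papp q z u).
Proof.
move=> [x [v [v' [-> [hl [hv [ha [hf ->]]]]]]]].
exists x, v, v'; rewrite !pplug_app; do !split => //.
  exact: lookup_app.
move=> y /hf; apply: contra; rewrite [y \in _ ++ S]mem_cat mem_pvars_app.
apply/implyP; rewrite !mem_cat ?in_cons ?mem_cat; rewrite ?in_cons ?mem_cat; rewrite ?implybE /is_true; btauto.
Qed.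

Lemma um_app S z u Q p q : um_stepS (S ++ z :: tvars u) Q p q ->
  um_stepS S (pctx_app Q z u) (papp p z u) (papp q z u).
Proof.
move=> [x [t [u' [-> [hf ->]]]]].
exists x, t, u'; rewrite pplug_app pplugp_app; do !split => //.
move: hf; apply: contra; rewrite [x \in _ ++ S]mem_cat mem_pctx_vars_app.
apply/implyP; rewrite !mem_cat ?in_cons ?mem_cat; rewrite ?in_cons ?mem_cat; rewrite ?implybE /is_true; btauto.
Qed.

Lemma claim_app n U1 A1 P1 U A z u : Claim n U1 A1 P1 ->
  (forall Q, inX U1 A1 Q -> inX U A (pctx_app Q z u)) ->
  (forall Q, Mctx U1 A1 Q -> Mctx U A (pctx_app Q z u)) ->
  Claim n U A (pctx_app P1 z u).
Proof.
move=> IH hX hM w S hw hf.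
have [|r [ps [Ps [Pm [h0 [hs [hm hu]]]]]]] := IH w (S ++ z :: tvars u) hw.
  move=> y /hf; apply: contra; rewrite [y \in S ++ _]mem_cat mem_pctx_vars_app.
  apply/implyP; rewrite !mem_cat ?in_cons ?mem_cat; rewrite ?in_cons ?mem_cat; rewrite ?implybE /is_true; btauto.
exists (papp r z u), (fun i => papp (ps i) z u), (fun i => pctx_app (Ps i) z u),
  (pctx_app Pm z u); split; [|split; [|split]].
- by rewrite h0 pplug_app.
- by move=> i /hs [/hX h1 /ue_app h2].
- exact: hM.
- exact: um_app.
Qed.

Lemma Hat_dec C0 : is_Hat C0 -> exists H a, is_H H /\ (forall w, tplug C0 w = tplug H (App w a)) /\
  unC H = unC C0 /\ anC H = anC C0 /\ {subset cvars H <= cvars C0}.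
Proof.
elim => [t|C t _ [H [a [hH [ht [hu [ha hc]]]]]]|i C hi _ [H [a [hH [ht [hu [ha hc]]]]]]].
- exists Hole, t; do !split => //; constructor.
- exists (CAppL H t), a; do !split => //=; first by constructor.
  + by move=> w; rewrite ht.
  + by move=> y; rewrite !mem_cat => /orP[/hc->|->]; rewrite ?orbT.
- exists (CAppR i H), a; do !split => //=; first by constructor.
  + by move=> w; rewrite ht.
  + by rewrite hu.
  + by rewrite ha.
  + by move=> y; rewrite !mem_cat => /orP[->|/hc->]; rewrite ?orbT.
Qed.

Arguments Hat_dec {C0}.
Arguments claim_app {n U1 A1 P1 U A z u}.

Lemma fresh_sub (S s s' : seq nat) y : {subset s <= s'} -> y \notin S ++ s' -> y \notin s ++ S.
Proof.
move=> hs; apply: contra; rewrite (mem_cat y s) (mem_cat y S).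
by case/orP => [/hs->|->]; rewrite ?orbT.
Qed.

Lemma claim_inner n U A P : Xctx n U A P ->
  (forall m U' A' P', m < n -> Xctx m U' A' P' -> Claim m U' A' P') -> Claim n U A P.
Proof.
elim=> {n U A P}
  [C hC|U1 A1 P1 x1 C hM hx hC|n U A P x y hX IH hx|n U A P x i hX IH hx hi
  |n U A P x t hX IH hx|n U A P x v hX IH hxU hxA hv|n U0 A P0 x0 hX IH hxA].
- move=> _ w S hw hf. have [H [a [hH [ht [hu [ha hc]]]]]] := Hat_dec hC.
  case: w hw hf => // y b _ hf.
  exists (pplugp (PC H [::]) (b, [:: (y, a)])), (fun _ => pplug (PC C [::]) (Lam y b)),
    (fun _ => PC C [::]), (PC H [::]).
  split => //; split => //; split; first by rewrite -hu -ha; constructor.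
  exists y, b, a; split; first by rewrite /= ht.
  split => //. apply: (@fresh_sub _ _ (pctx_vars (PC C [::]))).
    by move=> z /=; rewrite !cats0; apply: hc.
  by apply: hf; rewrite inE eqxx.
- move=> _ w S hw hf. have [H [a [hH [ht [hu [ha hc]]]]]] := Hat_dec hC.
  case: w hw hf => // y b _ hf.
  have hxU : x1 \notin U1 by move: hx; rewrite in_fsetU negb_or => /andP[].
  set Pm := prog_app_ctx (pplug P1 (Var x1)) x1 H.
  exists (pplugp Pm (b, [:: (y, a)])),
    (fun _ => pplug (prog_app_ctx (pplug P1 (Var x1)) x1 C) (Lam y b)),
    (fun _ => prog_app_ctx (pplug P1 (Var x1)) x1 C), Pm.
  split => //; split => //; split.
    have := M_her hM hx hH. by rewrite hu ha (mem_fsetD1 hxU).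
  exists y, b, a; split; first by rewrite /Pm /= ht.
  split => //. apply: (@fresh_sub _ _ (pctx_vars (prog_app_ctx (pplug P1 (Var x1)) x1 C))).
    move=> z /=; rewrite !mem_cat !in_cons !mem_cat.
    by case/or3P => [->|->|/orP[->|/orP[/hc->|->]]]; rewrite ?orbT.
  by apply: hf; rewrite inE eqxx.
- move=> Hs; apply: claim_app (IH Hs) _ _.
    by move=> Q [m hQ]; exists m; apply: X_var.
  by move=> Q hQ; apply: M_var.
- move=> Hs; apply: claim_app (IH Hs) _ _.
    by move=> Q [m hQ]; exists m; apply: X_I.
  by move=> Q hQ; apply: M_I.
- move=> Hs; apply: claim_app (IH Hs) _ _.
    by move=> Q [m hQ]; exists m; apply: X_gc.
  by move=> Q hQ; apply: M_gc.
- move=> Hs; apply: claim_app (IH Hs) _ _.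
    by move=> Q [m hQ]; exists m; apply: X_U.
  by move=> Q hQ; apply: M_U.
- move=> Hs w S hw hf.
  set P0' := pctx_app P0 x0 w.
  have hX' : Xctx n (U0 `\ x0)%fset A P0'.
    case: (boolP (x0 \in U0)) => h; first exact: X_U.
    rewrite (mem_fsetD1 h); apply: X_gc => //; by rewrite in_fsetU negb_or h hxA.
  have hC := Hs n _ _ _ (ltnSn n) hX'.
  set q := pplug (prog_app_ctx (pplug P0 (Var x0)) x0 Hole) w.
  have hq : q = pplug P0' (Var x0) by rewrite /q /P0' pplug_app /papp /= cats0.
  have [w' [ha [hf' hv']]] := fresh_rename w (S ++ pvars q ++ pctx_vars P0').
  have [|r [ps [Ps [Pm [h0 [hs [hm hu]]]]]]] := hC w' S (hv' hw).
    move=> z /hf'; apply: contra; rewrite (mem_cat z S) (mem_cat z S) (mem_cat z (pvars q)).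
    by case/orP => ->; rewrite ?orbT.
  exists r, (fun i => if i is i'.+1 then ps i' else q),
    (fun i => if i is i'.+1 then Ps i' else P0'), Pm.
  split => //; split; last by [].
  move=> [|i] hi /=; last exact: hs.
  split; first by exists n.
  exists x0, w, w'; split => //; split; first exact: lookup_last.
  split => //; split => //; split => //.
  move=> z /hf'; apply: contra; rewrite (mem_cat z S) (mem_cat z (pvars q) S) (mem_cat z (pvars q) (pctx_vars P0')).
  by case/orP => ->; rewrite ?orbT.
Qed.

Arguments claim_inner {n U A P}.

Lemma claim_all n U A P : Xctx n U A P -> Claim n U A P.
Proof.
elim: n {-2}n (leqnn n) U A P => [|N IHN] n hn U A P hX;
  apply: (claim_inner hX) => m U' A' P' hm.
  by move: (leq_trans hm hn).
apply: IHN; rewrite -ltnS; exact: leq_trans hm hn.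
Qed.

Theorem mainTheorem6 (k : nat) (U A : {fset nat}) (P : pctx) (x : nat)
    (v v' : term) (p q : program) :
  (* P in X_{U,A}, via a derivation with exactly k rules (NA) *)
  Xctx k U A P ->
  (* P(x) = v *)
  lookup P x v -> is_value v ->
  (* p = P<x> ->ue P<v^alpha> = q *)
  p = pplug P (Var x) -> fresh_copy p v v' -> q = pplug P v' ->
  exists (r : program) (ps : nat -> program) (Ps : nat -> pctx) (Pm : pctx),
    ps 0 = q /\
    (forall i, i < k -> inX U A (Ps i) /\ ue_step (Ps i) (ps i) (ps i.+1)) /\
    Mctx U A Pm /\ um_step Pm (ps k) r.
Proof.
move=> hX hl hv hp hfc hq.
have [hal hfr] := hfc.
have [|r [ps [Ps [Pm [h0 [hs [hm hu]]]]]]] :=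
  @claim_all k U A P hX v' [::] (alpha_value _ _ hal hv).
  move=> z /hfr; apply: contra => /= hz.
  by rewrite hp; apply: (pctx_vars_pplug P (Var x) z).
exists r, ps, Ps, Pm; split; first by rewrite h0 hq.
split.
  move=> i /hs [hi [y [u [u' [e1 [e2 [e3 [e4 [e5 e6]]]]]]]]]; split => //.
  exists y, u, u'; split => //; split => //; split => //; split => //.
  by split => // z /e5; rewrite cats0.
split => //. have [y [t [u [e1 [e2 e3]]]]] := hu.
exists y, t, u; rewrite cats0 in e2; by [].
Qed.
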